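(* Let $r$ be a positive integer, let $A$ be a cubic graph of order $4r$, let $a$ be a vertex of $A$, and let $A^-=A-a$. If $A^-$ is an induced subgraph of a cubic graph $H$, then any $2$-conversion set of $H$ contains at least $r$ vertices of $A^-$.
   Context: For a graph $H=(V,E)$ and $S_0\subseteq V$, the irreversible $2$-threshold conversion process sets, for $t=1,2,\dots$, $S_t=S_{t-1}\cup\{v: v \text{ has at least } 2 \text{ neighbours in } S_{t-1}\}$; $S_0$ is a $2$-conversion set of $H$ if $S_t=V$ for some $t\ge 0$. *)

(* Defs.v *)
From mathcomp Require Import all_boot.
Set Implicit Arguments. Unset Strict Implicit. Unset Printing Implicit Defensive.

Definition simple_graph (T : finType) (e : rel T) : Prop :=
  symmetric e /\ irreflexive e.

Definition cubic (T : finType) (e : rel T) : Prop :=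
  simple_graph e /\ forall v : T, #|[set u | e v u]| = 3.

Definition conv_step (T : finType) (e : rel T) (S : {set T}) : {set T} :=
  S :|: [set v | 2 <= #|[set u in S | e v u]|].

Definition conversion_set2 (T : finType) (e : rel T) (S0 : {set T}) : Prop :=
  exists t : nat, iter t (conv_step e) S0 = [set: T].

Definition induced_embedding_minus (TA TH : finType) (eA : rel TA) (eH : rel TH)
  (a : TA) (f : TA -> TH) : Prop :=
  {in [pred x | x != a] &, injective f} /\
  forall x y, x != a -> y != a -> eH (f x) (f y) = eA x y.

(* Main.v *)
Require Import Defs.
From mathcomp Require Import all_boot.
From mathcomp Require Import zify.
Set Implicit Arguments. Unset Strict Implicit. Unset Printing Implicit Defensive.

Lemma cardP (T : finType) (P : pred T) : #|[set y | P y]| = \sum_y (P y : nat).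
Proof.
rewrite -sum1_card big_mkcond /=; apply: eq_bigr => y _; rewrite inE; by case: (P y).
Qed.

Lemma card_split (T : finType) (P Q : pred T) :
  #|[set u | P u]| = #|[set u | Q u && P u]| + #|[set u | ~~ Q u && P u]|.
Proof. rewrite !cardP -big_split; apply: eq_bigr => u _ /=; by case: (Q u); case: (P u). Qed.

Lemma iter_mono (T : finType) (e : rel T) S0 m n : m <= n ->
  iter m (conv_step e) S0 \subset iter n (conv_step e) S0.
Proof.
move/subnK <-; elim: (n - m) => [|k IH]; first by rewrite add0n.
rewrite addSn /=; apply: subset_trans IH _; exact: subsetUl.
Qed.

Definition tm (T : finType) (e : rel T) S0 t (w : T) :=
  find (fun k => w \in iter k (conv_step e) S0) (iota 0 t.+1).

Lemma tm_has (T : finType) (e : rel T) S0 t w :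
  iter t (conv_step e) S0 = [set: T] ->
  has (fun k => w \in iter k (conv_step e) S0) (iota 0 t.+1).
Proof.
move=> Ht; apply/hasP; exists t; first by rewrite mem_iota add0n ltnSn.
by rewrite Ht inE.
Qed.

Lemma tm_le (T : finType) (e : rel T) S0 t w :
  iter t (conv_step e) S0 = [set: T] -> tm e S0 t w <= t.
Proof.
move=> Ht; have := tm_has w Ht; rewrite has_find size_iota ltnS; done.
Qed.

Lemma tm_mem (T : finType) (e : rel T) S0 t w :
  iter t (conv_step e) S0 = [set: T] -> w \in iter (tm e S0 t w) (conv_step e) S0.
Proof.
move=> Ht; have := nth_find 0 (tm_has w Ht).
by rewrite nth_iota // ltnS (tm_le w Ht).
Qed.

Lemma tm_spec (T : finType) (e : rel T) S0 t w k :
  iter t (conv_step e) S0 = [set: T] ->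
  (w \in iter k (conv_step e) S0) = (tm e S0 t w <= k).
Proof.
move=> Ht; case: (leqP (tm e S0 t w) k) => h.
  exact: (subsetP (iter_mono e S0 h) _ (tm_mem w Ht)).
have := before_find 0 h; rewrite nth_iota //; last by apply: leq_trans h _; exact: leq_trans (tm_le w Ht) _.
Qed.

Lemma tm_step (T : finType) (e : rel T) S0 t w :
  iter t (conv_step e) S0 = [set: T] -> w \notin S0 ->
  2 <= #|[set u | e w u && (tm e S0 t u < tm e S0 t w)]|.
Proof.
move=> Ht wS.
have : tm e S0 t w != 0.
  by apply: contra wS => /eqP h; have := tm_mem w Ht; rewrite h.
case E: (tm e S0 t w) => [|k] // _.
have := tm_mem w Ht; rewrite E /= /conv_step in_setU.
rewrite -/(iter k (conv_step e) S0) (tm_spec w k Ht) E ltnn /= inE => h.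
apply: leq_trans h _; apply: subset_leq_card; apply/subsetP => u.
by rewrite !inE (tm_spec u k Ht) ltnS andbC.
Qed.

Theorem lemma5p15 (r : nat) (TA TH : finType) (eA : rel TA) (eH : rel TH)
  (a : TA) (f : TA -> TH) :
  0 < r ->
  cubic eA -> #|TA| = 4 * r ->
  cubic eH ->
  induced_embedding_minus eA eH a f ->
  forall S0 : {set TH}, conversion_set2 eH S0 ->
  r <= #|S0 :&: (f @: [set x | x != a])|.
Proof.
move=> r0 [[symA irrA] degA] cardA [[symH irrH] degH] [injf embf] S0 [t Ht].
set X := [set x : TA | x != a].
have key1 : forall R : pred TH,
    #|[set u | (u \in f @: X) && R u]| = #|[set y | (y != a) && R (f y)]|.
  move=> R.
  have -> : [set u | (u \in f @: X) && R u] = f @: [set y | (y != a) && R (f y)].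
    apply/setP => u; rewrite inE; apply/andP/imsetP.
      case=> /imsetP [y]; rewrite inE => ya -> Ry.
      by exists y => //; rewrite inE ya Ry.
    case=> y; rewrite inE => /andP [ya Ry] ->; split => //.
    by apply/imsetP; exists y; rewrite ?inE.
  rewrite card_in_imset //.
  by move=> y1 y2; rewrite !inE => /andP[h1 _] /andP[h2 _]; apply: injf.
pose T x := tm eH S0 t (f x).
pose d x := \sum_y ((x != a) && (y != a) && eA x y : nat).
pose i x := \sum_y ((x != a) && (y != a) && eA x y && (T y < T x) : nat).
pose o x := \sum_y ((x != a) && (y != a) && eA x y && (T x < T y) : nat).
pose tt x := \sum_y ((x != a) && (y != a) && eA x y && (T y == T x) : nat).
pose ux x := ((x != a) && (f x \notin S0) : nat).
pose sx x := ((x != a) && (f x \in S0) : nat).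
have Hs : #|S0 :&: (f @: X)| = \sum_x sx x.
  have -> : S0 :&: (f @: X) = [set u | (u \in f @: X) && (u \in S0)].
    by apply/setP => u; rewrite !inE andbC.
  by rewrite key1 cardP.
have HA : forall x, i x + o x + tt x = d x.
  move=> x; rewrite /i /o /tt /d -!big_split; apply: eq_bigr => y _ /=.
  case: ((x != a) && (y != a) && eA x y) => //=.
  by case: ltngtP.
have HB : \sum_x i x = \sum_x o x.
  rewrite /i /o exchange_big; apply: eq_bigr => j _; apply: eq_bigr => k _.
  by rewrite (symA k j); case: (k != a); case: (j != a).
have HX : \sum_x (x != a : nat) = 4 * r - 1.
  rewrite -cardP -cardA subn1 -(cardC1 a); apply: eq_card => z; rewrite !inE //=.
have Hd : \sum_x d x + 3 = 3 * (4 * r - 1).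
  have Hp : forall x, d x + ((x != a) && eA x a) = 3 * (x != a).
    move=> z; case: (eqVneq z a) => [->|xa].
      by rewrite /d /= big1 // => y _; rewrite eqxx.
    rewrite /= muln1 -(degA z) cardP (bigD1 a) //= addnC; congr (_ + _).
    rewrite /d (bigD1 a) //= xa eqxx /= add0n.
    by apply: eq_bigr => y ->.
  have H3 : \sum_x ((x != a) && eA x a : nat) = 3.
    rewrite -(degA a) cardP; apply: eq_bigr => z _.
    rewrite (symA z a); case: (eqVneq z a) => [->|//].
    by rewrite irrA.
  have : \sum_z (d z + ((z != a) && eA z a)) = 3 * \sum_z (z != a : nat).
    by rewrite (eq_bigr _ (fun z _ => Hp z)) -big_distrr.
  by rewrite big_split /= H3 HX.
have HD : forall x, x != a -> f x \notin S0 -> d x <= i x + 1.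
  move=> z za zS.
  have h2 := tm_step Ht zS.
  rewrite (@card_split _ (fun u => eH (f z) u && (tm eH S0 t u < tm eH S0 t (f z)))
     (fun u => u \in f @: X)) /= in h2.
  have h3 := degH (f z).
  rewrite (@card_split _ (fun u => eH (f z) u) (fun u => u \in f @: X)) /= in h3.
  have m : #|[set u | (u \notin f @: X) && (eH (f z) u && (tm eH S0 t u < tm eH S0 t (f z)))]|
      <= #|[set u | (u \notin f @: X) && eH (f z) u]|.
    by apply: subset_leq_card; apply/subsetP => u; rewrite !inE => /andP[-> /andP[-> _]].
  rewrite (key1 (fun u => eH (f z) u && (tm eH S0 t u < tm eH S0 t (f z)))) in h2.
  rewrite (key1 (fun u => eH (f z) u)) in h3.
  have Ei : #|[set y | (y != a) && (eH (f z) (f y) && (tm eH S0 t (f y) < tm eH S0 t (f z)))]| = i z.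
    rewrite cardP /i; apply: eq_bigr => y _; rewrite za /=.
    case: (eqVneq y a) => [->|ya]; first by rewrite ?eqxx.
    by rewrite embf.
  have Ed : #|[set y | (y != a) && eH (f z) (f y)]| = d z.
    rewrite cardP /d; apply: eq_bigr => y _; rewrite za /=.
    case: (eqVneq y a) => [->|ya]; first by rewrite ?eqxx.
    by rewrite embf.
  rewrite Ei in h2; rewrite Ed in h3.
  lia.
have Hd3 : forall x, d x <= 3.
  move=> z; rewrite -(degA z) cardP; apply: leq_sum => y _.
  by case: (z != a); case: (y != a); case: (eA z y).
have Hus : \sum_z ux z + \sum_z sx z = \sum_z (z != a : nat).
  rewrite -big_split; apply: eq_bigr => z _ /=; rewrite /ux /sx.
  by case: (z != a); case: (f z \in S0).
have F2 : forall w, (w \in S0) = (tm eH S0 t w <= 0).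
  by move=> w; rewrite -(tm_spec w 0 Ht).
have d0 : d a = 0 by rewrite /d big1 // => y _; rewrite eqxx.
case: (boolP [exists z, (z != a) && (f z \notin S0)]); last first.
  move=> /existsPn hall.
  have : \sum_z sx z = \sum_z (z != a : nat).
    apply: eq_bigr => z _; rewrite /sx; have := hall z.
    by case: (z != a); case: (f z \in S0).
  rewrite Hs; lia.
move=> /existsP [x0 /andP [x0a x0S]].
case: (@arg_maxnP _ x0 (fun z => z != a) T x0a) => xs xsa maxT.
have xsS : f xs \notin S0.
  apply/negP => h; move: x0S; rewrite F2 -/(T x0) -ltnNge => h0.
  move: h; rewrite F2 -/(T xs) => h.
  have := maxT x0 x0a; lia.
have o0 : o xs = 0.
  rewrite /o big1 // => y _.
  case: (eqVneq y a) => [->|ya]; first by rewrite /= andbF.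
  have h : T y <= T xs := maxT y ya.
  by rewrite ltnNge h andbF.
have Hp : forall z, d z + ((z == xs) && (tt z == 0)) <= ux z * (i z + 1) + 3 * sx z.
  move=> z; case: (eqVneq z a) => [->|za].
    by rewrite d0 (negbTE (ltac:(rewrite eq_sym; exact: xsa) : a != xs)).
  rewrite /ux /sx za /=; case hS: (f z \in S0) => /=.
    have -> : (z == xs) = false.
      by apply/negP => /eqP E; rewrite -E hS in xsS.
    by rewrite /= addn0 mul0n add0n muln1 Hd3.
  rewrite mul1n muln0 addn0.
  case: (eqVneq z xs) => [E|_] /=; last by rewrite addn0; apply: HD => //; rewrite hS.
  subst z.
  case: (eqVneq (tt xs) 0) => [E|_] /=; last by rewrite addn0; apply: HD => //; rewrite hS.
  by have := HA xs; rewrite o0 E !addn0 => ->.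
have Hsum : \sum_z (d z + ((z == xs) && (tt z == 0))) <= \sum_z (ux z * (i z + 1) + 3 * sx z).
  by apply: leq_sum => z _; exact: Hp.
rewrite big_split /= in Hsum.
have Hb : \sum_z ((z == xs) && (tt z == 0) : nat) = (tt xs == 0).
  rewrite (bigD1 xs) //= eqxx big1 ?addn0 // => z /negbTE ->; done.
have Hr : \sum_z (ux z * (i z + 1) + 3 * sx z) <= \sum_z i z + \sum_z ux z + 3 * \sum_z sx z.
  rewrite big_distrr -!big_split /=; apply: leq_sum => z _.
  rewrite /ux /sx; case: (z != a); case: (f z \in S0) => /=; lia.
have Hall : \sum_z i z + \sum_z o z + \sum_z tt z = \sum_z d z.
  by rewrite -!big_split; apply: eq_bigr => z _; exact: HA.
have Htt : tt xs <= \sum_z tt z by rewrite (bigD1 xs) //= leq_addr.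
rewrite Hb in Hsum; rewrite Hs.
case: (eqVneq (tt xs) 0) => E.
  rewrite E eqxx /= in Hsum; lia.
rewrite (negbTE E) /= in Hsum; move: E; rewrite -lt0n => E; lia.
Qed.
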